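(* Let $G=(V,E)$ be a graph and $k$ a nonnegative integer. Then $G$ has a dominating set of size $k$ if and only if it is possible to turn $G$ into a constellation (with vertex set $V$) by deleting $|E|-|V|+k$ edges.
   Context: All graphs are finite, simple and undirected. A dominating set of $G$ is a set $D\subseteq V$ such that every vertex of $V\setminus D$ is adjacent to some vertex of $D$. A star is a complete bipartite graph $K_{1,n}$ for some $n\ge 0$ (so a single vertex is a star). A constellation is a forest in which every connected component is a star. *)

(* Defs.v *)
From mathcomp Require Import all_boot all_order all_algebra.
Set Implicit Arguments. Unset Strict Implicit. Unset Printing Implicit Defensive.

(* A finite simple graph on vertex type T is given by its edge set
   E : {set {set T}}, each edge being a 2-element set of vertices. *)
Definition simple_edges (T : finType) (E : {set {set T}}) : Prop :=
  forall e, e \in E -> #|e| = 2.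

Definition adj (T : finType) (E : {set {set T}}) : rel T :=
  fun x y => (x != y) && ([set x; y] \in E).

Definition dominating (T : finType) (E : {set {set T}}) (D : {set T}) : Prop :=
  forall v, v \notin D -> exists2 u, u \in D & adj E u v.

Definition has_cycle (T : finType) (E : {set {set T}}) : Prop :=
  exists p : seq T, [/\ 3 <= size p, uniq p & cycle (adj E) p].

Definition forest (T : finType) (E : {set {set T}}) : Prop := ~ has_cycle E.

Definition component (T : finType) (E : {set {set T}}) (x : T) : {set T} :=
  [set y | connect (adj E) x y].

Definition induced_star (T : finType) (E : {set {set T}}) (C : {set T}) : Prop :=
  exists2 c, c \in C &
    forall u v, u \in C -> v \in C ->
      adj E u v = ((u == c) && (v != c)) || ((v == c) && (u != c)).

Definition constellation (T : finType) (E : {set {set T}}) : Prop :=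
  forest E /\ forall x : T, induced_star E (component E x).

(* Main.v *)
Require Import Defs.
From mathcomp Require Import all_boot all_order all_algebra.
Set Implicit Arguments. Unset Strict Implicit. Unset Printing Implicit Defensive.
From mathcomp Require Import zify ring.

Lemma adjC (T : finType) (E : {set {set T}}) u v : adj E u v = adj E v u.
Proof. by rewrite /adj eq_sym setUC. Qed.

Lemma adj_sub (T : finType) (E F : {set {set T}}) u v :
  F \subset E -> adj F u v -> adj E u v.
Proof. by rewrite /adj => sFE /andP[-> /(subsetP sFE) ->]. Qed.

Lemma adj_sym (T : finType) (E : {set {set T}}) : connect_sym (adj E).
Proof. by apply: sym_connect_sym => u v; apply: adjC. Qed.

Definition fdom (T : finType) (E : {set {set T}}) (D : {set T}) (v : T) :=
  odflt v [pick u in D | adj E u v].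

Definition starF (T : finType) (E : {set {set T}}) (D : {set T}) :=
  [set [set fdom E D v; v] | v in ~: D].

Lemma dir1 (T : finType) (E : {set {set T}}) (D : {set T}) :
  dominating E D ->
  [/\ starF E D \subset E, #|starF E D| = #|~: D| & constellation (starF E D)].
Proof.
move=> dom; set f := fdom E D; set F := starF E D.
have fD v : v \notin D -> f v \in D /\ adj E (f v) v.
  move=> vD; rewrite /f /fdom; case: pickP => [u /andP[uD a]|none] //=.
  by case: (dom v vD) => u uD a; move: (none u); rewrite uD a.
have fneq v : v \notin D -> f v != v.
  by move=> vD; case: (fD v vD) => /[swap] _; apply: contraTneq => ->.
have adjF u v : adj F u v -> (u \notin D /\ v = f u) \/ (v \notin D /\ u = f v).
  rewrite /adj => /andP[neq /imsetP[w]]; rewrite inE => wD eq.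
  have : u \in [set f w; w] by rewrite -eq set21.
  have : v \in [set f w; w] by rewrite -eq set22.
  rewrite !inE => /orP[]/eqP ev /orP[]/eqP eu; subst u v; rewrite ?eqxx // in neq.
    by left.
  by right.
have adjFf v : v \notin D -> adj F (f v) v.
  move=> vD; rewrite /adj fneq //=; apply/imsetP; exists v => //; by rewrite inE.
have adjFD u v : adj F u v -> u \notin D -> v = f u.
  move=> a uD; case: (adjF u v a) => [[] //|[vD eq]].
  by case: (fD v vD); rewrite -eq (negbTE uD).
split.
- apply/subsetP => e /imsetP[v]; rewrite inE => vD ->.
  by case: (fD v vD) => _ /andP[].
- rewrite card_in_imset // => v w; rewrite !inE => vD wD eq.
  have : v \in [set f w; w] by rewrite -eq set22.
  rewrite !inE => /orP[]/eqP // ev.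
  by case: (fD w wD); rewrite -ev (negbTE vD).
set g := fun v => if v \in D then v else f v.
have gD v : g v \in D by rewrite /g; case: ifP => // /negbT /fD [].
have gadj u v : adj F u v -> g u = g v.
  move=> a; case: (adjF u v a) => [[uD ->]|[vD ->]]; rewrite /g.
    by case: (fD u uD) => fu _; rewrite (negbTE uD) fu.
  by case: (fD v vD) => fv _; rewrite (negbTE vD) fv.
have gconn x y : connect (adj F) x y -> g x = g y.
  move/connectP => [p pth ->]; elim: p x pth => //= z p IH x /andP[a pth].
  by rewrite (gadj _ _ a) (IH _ pth).
have conng x : connect (adj F) x (g x).
  rewrite /g; case: ifPn => xD; first exact: connect0.
  by apply: connect1; rewrite adjC adjFf.
have gg x : g (g x) = g x by rewrite /g (gD x).
split.
- move=> [p [sp up cp]].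
  have [w wp wD] : exists2 w, w \in p & w \notin D.
    case: p sp up cp => [|x [|y s]] //= _ _ /andP[a _].
    case: (adjF x y a) => [[xD _]|[yD _]].
      by exists x => //; rewrite inE eqxx.
    by exists y => //; rewrite !inE eqxx orbT.
  case: (rot_to wp) => i s' eqr.
  have : cycle (adj F) (w :: s') by rewrite -eqr rot_cycle.
  have : uniq (w :: s') by rewrite -eqr rot_uniq.
  have : 3 <= size (w :: s') by rewrite -eqr size_rot.
  case: s' {eqr} => [|a [|b s]] // _ /andP[_] /andP[anin _].
  rewrite /cycle rcons_path => /andP[/andP[a1 _] a2].
  rewrite adjC in a2.
  have e1 := adjFD _ _ a1 wD; have e2 := adjFD _ _ a2 wD.
  move: anin; rewrite e1 -e2 /= => /negP; apply; apply: mem_last.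
- move=> x; exists (g x); first by rewrite /component inE.
  move=> u v; rewrite /component !inE => /gconn gu /gconn gv.
  have cD : g x \in D by [].
  have uc w : g x = g w -> w != g x -> w \notin D /\ f w = g x.
    move=> gw; rewrite gw /g; case: ifPn => [_|wD _]; first by rewrite eqxx.
    by [].
  apply/idP/idP.
  + move=> a; case: (adjF u v a) => [[uD ev]|[vD eu]].
      have : g u = f u by rewrite /g (negbTE uD).
      rewrite -gu -ev => ->; rewrite eqxx /=.
      by rewrite andbF /=; case/andP: a.
    have : g v = f v by rewrite /g (negbTE vD).
    rewrite -gv -eu => ->; rewrite eqxx /=.
    by rewrite andbF orbF eq_sym; case/andP: a.
  + move=> /orP[]/andP[/eqP -> ne].
      by case: (uc v gv ne) => vD <-; apply: adjFf.
    by case: (uc u gu ne) => uD <-; rewrite adjC; apply: adjFf.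
Qed.

Definition star_b (T : finType) (E : {set {set T}}) (C : {set T}) (c : T) :=
  [forall u in C, forall v in C,
     adj E u v == ((u == c) && (v != c)) || ((v == c) && (u != c))].

Definition cen (T : finType) (F : {set {set T}}) (x : T) :=
  [pick c in component F x | star_b F (component F x) c].

Definition cv (T : finType) (F : {set {set T}}) (x : T) := odflt x (cen F x).

Lemma dir2 (T : finType) (E F : {set {set T}}) :
  simple_edges E -> F \subset E -> constellation F ->
  exists D : {set T}, dominating E D /\ #|F| = #|~: D|.
Proof.
move=> sim sFE [_ st].
have csym := adj_sym F.
have comp_self x : x \in component F x by rewrite inE connect0.
have comp_eq x y : y \in component F x -> component F y = component F x.
  rewrite inE => cxy; apply/setP => z; rewrite !inE.
  by rewrite (same_connect csym cxy).
have cenS x : cen F x = Some (cv F x).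
  rewrite /cv /cen; case: pickP => [c _|none] //=.
  case: (st x) => c cC H; move: (none c); rewrite cC /=.
  suff -> : star_b F (component F x) c by [].
  apply/forall_inP => u uC; apply/forall_inP => v vC; by rewrite H.
have cvP x : cv F x \in component F x /\ star_b F (component F x) (cv F x).
  have := cenS x; rewrite /cen; case: pickP => [c /andP[cC sc]|] //= [<-] //.
have cvc x y : component F y = component F x -> cv F y = cv F x.
  by move=> eq; move: (cenS x) (cenS y); rewrite /cen eq => -> [].
have starE x u v : u \in component F x -> v \in component F x ->
    adj F u v = ((u == cv F x) && (v != cv F x)) || ((v == cv F x) && (u != cv F x)).
  move=> uC vC; case: (cvP x) => _ /forall_inP/(_ u uC)/forall_inP/(_ v vC)/eqP.
  by [].
set D := [set cv F x | x : T].
have inD v : (v \in D) = (cv F v == v).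
  apply/idP/idP => [/imsetP[y _ ->]|/eqP <-]; last exact: imset_f.
  case: (cvP y) => cy _; by rewrite (cvc _ _ (comp_eq _ _ cy)).
have cvD v : cv F v \in D by exact: imset_f.
exists D; split.
  move=> v vD; exists (cv F v) => //; apply: (adj_sub sFE).
  rewrite (starE v) ?eqxx //=; last by case: (cvP v).
  by move: vD; rewrite inD eq_sym => ->.
have -> : F = [set [set v; cv F v] | v in ~: D].
  apply/setP => e; apply/idP/imsetP.
  - move=> eF; have /cards2P [u [v [neq ee]]] : #|e| == 2.
      by rewrite (sim e (subsetP sFE e eF)).
    have a : adj F u v by rewrite /adj neq -ee.
    have vC : v \in component F u by rewrite inE connect1.
    have cvv : cv F v = cv F u by apply: cvc; apply: comp_eq.
    move: a; rewrite (starE u u v) ?comp_self //; case/orP => /andP[/eqP e1 ne].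
      exists v; first by rewrite inE inD cvv eq_sym.
      by rewrite ee setUC cvv -e1.
    exists u; first by rewrite inE inD eq_sym.
    by rewrite ee e1.
  - move=> [v]; rewrite inE inD => ne ->.
    have : adj F (cv F v) v.
      rewrite (starE v) ?eqxx ?comp_self //=; [by rewrite eq_sym ne | by case: (cvP v) ..].
    by case/andP => _; rewrite setUC.
rewrite card_in_imset // => v w; rewrite !inE !inD => nv nw eq.
have : v \in [set w; cv F w] by rewrite -eq set21.
rewrite !inE => /orP[]/eqP // ev; exfalso.
move: nv; rewrite ev; case: (cvP w) => cw _.
by rewrite (cvc _ _ (comp_eq _ _ cw)) eqxx.
Qed.

Local Open Scope ring_scope.

Theorem mainTheorem5 (T : finType) (E : {set {set T}}) (k : nat) :
  simple_edges E ->
  (exists D : {set T}, dominating E D /\ #|D|%N = k) <->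
  (exists F : {set {set T}},
      [/\ F \subset E,
          (#|E|%:Z - #|F|%:Z = #|E|%:Z - #|T|%:Z + k%:Z)%R
        & constellation F]).
Proof.
move=> sim; split.
  move=> [D [dom cD]]; case: (dir1 dom) => sFE cF con.
  exists (starF E D); split => //.
  have := cardsC D; rewrite cD -cF => <-; rewrite PoszD; ring.
move=> [F [sFE eq con]]; case: (dir2 sim sFE con) => D [dom cF].
exists D; split => //.
have := cardsC D; rewrite -cF; move: eq.
generalize #|E| #|F| #|T| #|D|; intros; lia.
Qed.
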